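(* Let $y_{\min}>0$ and suppose $0\le v\le y_{\min}\sum_{i=1}^{n^-}h^-_i$. Then there exist integers $\ell_1,\ell_2$ with $0\le\ell_1<\ell_2\le n^-$ such that, setting $Y:=\dfrac{v-y_{\min}\sum_{i=1}^{\ell_1}h^-_i}{\sum_{i=\ell_1+1}^{\ell_2}h^-_i}$, one has $0\le Y\le y_{\min}$ and the vector $y$ with $y_i=y_{\min}$ for $1\le i\le\ell_1$, $y_i=Y$ for $\ell_1+1\le i\le\ell_2$, and $y_i=0$ for $\ell_2+1\le i\le n^-$ is an optimal solution of $$\min_{y\in\mathbb{R}^{n^-}}\ -\sum_{i=1}^{n^-}\left(\frac{y_i}{\lambda}\right)^{1/\beta}\quad\text{s.t.}\quad y_{\min}\ge y_1\ge\cdots\ge y_{n^-}\ge 0,\qquad\sum_{i=1}^{n^-}h^-_iy_i=v.$$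
   Context: Fix $N\in\mathbb{N}$, $\beta\in(0,1)$, $\lambda>0$, and an integer $1\le n^-\le N$. A function $f:[0,1]\to\mathbb{R}$ is inverse S-shaped if it is strictly increasing, continuously differentiable, and there is $x_0\in[0,1]$ such that $f'$ is strictly decreasing on $[0,x_0]$ and strictly increasing on $[x_0,1]$. Let $W^-:[0,1]\to[0,1]$ be inverse S-shaped with $W^-(0)=0$, $W^-(1)=1$, and $h^-_i:=W^-\!\left(\frac{i}{N}\right)-W^-\!\left(\frac{i-1}{N}\right)$ for $i=1,\dots,n^-$. *)

(* Defs.v *)
From Stdlib Require Import Reals Lra List.
Open Scope R_scope.

(* Sum of f i for a <= i <= b (empty, i.e. 0, when b < a). *)
Definition sum_range (f : nat -> R) (a b : nat) : R :=
  fold_right (fun i acc => f i + acc) 0 (seq a (S b - a)).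

(* Real power x^a for x >= 0, with the convention 0^a = 0 (a > 0). Stdlib's
   Rpower would give Rpower 0 a = 1, so we guard the case x <= 0. *)
Definition rpow (x a : R) : R :=
  if Rle_dec x 0 then 0 else Rpower x a.

Definition has_deriv01 (f : R -> R) (x df : R) : Prop :=
  limit1_in (fun y => (f y - f x) / (y - x))
            (fun y => 0 <= y <= 1 /\ y <> x) df x.

Definition strictly_increasing_on (f : R -> R) (a b : R) : Prop :=
  forall x y, a <= x <= b -> a <= y <= b -> x < y -> f x < f y.

Definition strictly_decreasing_on (f : R -> R) (a b : R) : Prop :=
  forall x y, a <= x <= b -> a <= y <= b -> x < y -> f y < f x.

Definition inverse_S_shaped (f : R -> R) : Prop :=
  strictly_increasing_on f 0 1 /\
  exists f' : R -> R,
    (forall x, 0 <= x <= 1 -> has_deriv01 f x (f' x)) /\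
    (forall x, 0 <= x <= 1 ->
       limit1_in f' (fun y => 0 <= y <= 1) (f' x) x) /\
    exists x0, 0 <= x0 <= 1 /\
      strictly_decreasing_on f' 0 x0 /\ strictly_increasing_on f' x0 1.

Definition hminus (W : R -> R) (N : nat) (i : nat) : R :=
  W (INR i / INR N) - W (INR (i - 1) / INR N).

Definition feasible (W : R -> R) (N n : nat) (ymin v : R) (y : nat -> R) : Prop :=
  ymin >= y 1%nat /\
  (forall i, (1 <= i < n)%nat -> y i >= y (S i)) /\
  y n >= 0 /\
  sum_range (fun i => hminus W N i * y i) 1 n = v.

Definition objective (n : nat) (beta lambda : R) (y : nat -> R) : R :=
  - sum_range (fun i => rpow (y i / lambda) (1 / beta)) 1 n.

Definition optimal (W : R -> R) (N n : nat) (beta lambda ymin v : R)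
  (y : nat -> R) : Prop :=
  feasible W N n ymin v y /\
  forall z, feasible W N n ymin v z ->
    objective n beta lambda y <= objective n beta lambda z.

(* Main.v *)
Require Import Defs.
From Stdlib Require Import Reals Lra Lia List Classical.
Open Scope R_scope.

Fixpoint sumN (f : nat -> R) (n : nat) : R :=
  match n with O => 0 | S k => sumN f k + f (S k) end.
Fixpoint sum0 (f : nat -> R) (n : nat) : R :=
  match n with O => f O | S k => sum0 f k + f (S k) end.

Lemma fold_app (f : nat -> R) (l1 l2 : list nat) : fold_right (fun i acc => f i + acc) 0 (l1 ++ l2) =
  fold_right (fun i acc => f i + acc) 0 l1 + fold_right (fun i acc => f i + acc) 0 l2.
Proof. induction l1; simpl; [ring| rewrite IHl1; ring]. Qed.

Lemma sum_range_1 (f : nat -> R) n : sum_range f 1 n = sumN f n.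
Proof. unfold sum_range. replace (S n - 1)%nat with n by lia.
  induction n; [reflexivity|]. rewrite seq_S, fold_app, IHn. simpl. ring. Qed.

Lemma sum_range_split (f : nat -> R) a b : (a <= b)%nat -> sum_range f (S a) b = sumN f b - sumN f a.
Proof. intros H. rewrite <- !sum_range_1. unfold sum_range.
  replace (S b - 1)%nat with (a + (b - a))%nat by lia. rewrite seq_app, fold_app.
  replace (S a - 1)%nat with a by lia. replace (1 + a)%nat with (S a) by lia.
  replace (S b - S a)%nat with (b - a)%nat by lia. ring. Qed.

Lemma sumN_ext (f g : nat -> R) n : (forall i, (1 <= i <= n)%nat -> f i = g i) -> sumN f n = sumN g n.
Proof. induction n; intros H; simpl; [reflexivity|]. rewrite IHn, H; [reflexivity|lia|].
  intros; apply H; lia. Qed.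
Lemma sumN_le (f g : nat -> R) n : (forall i, (1 <= i <= n)%nat -> f i <= g i) -> sumN f n <= sumN g n.
Proof. induction n; intros H; simpl; [lra|]. assert (f (S n) <= g (S n)) by (apply H; lia).
  assert (sumN f n <= sumN g n) by (apply IHn; intros; apply H; lia). lra. Qed.
Lemma sumN_plus (f g : nat -> R) n : sumN (fun i => f i + g i) n = sumN f n + sumN g n.
Proof. induction n; simpl; [ring|rewrite IHn; ring]. Qed.
Lemma sumN_scal c (f : nat -> R) n : sumN (fun i => c * f i) n = c * sumN f n.
Proof. induction n; simpl; [ring|rewrite IHn; ring]. Qed.
Lemma sum0_ext (f g : nat -> R) n : (forall i, (i <= n)%nat -> f i = g i) -> sum0 f n = sum0 g n.
Proof. induction n; intros H; simpl; [apply H; lia|]. rewrite IHn, H; [reflexivity|lia|].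
  intros; apply H; lia. Qed.
Lemma sum0_plus (f g : nat -> R) n : sum0 (fun i => f i + g i) n = sum0 f n + sum0 g n.
Proof. induction n; simpl; [ring|rewrite IHn; ring]. Qed.
Lemma sum0_scal c (f : nat -> R) n : sum0 (fun i => c * f i) n = c * sum0 f n.
Proof. induction n; simpl; [ring|rewrite IHn; ring]. Qed.
Lemma sum0_zero (f : nat -> R) n : (forall i, (i <= n)%nat -> f i = 0) -> sum0 f n = 0.
Proof. intros H. rewrite (sum0_ext f (fun i => 0 * 0)) by (intros; rewrite H; [ring|lia]).
  rewrite sum0_scal. ring. Qed.
Lemma sum0_tele (g : nat -> R) n : sum0 (fun k => g k - g (S k)) n = g O - g (S n).
Proof. induction n; simpl; [ring|rewrite IHn; ring]. Qed.
Lemma exchange (A : nat -> nat -> R) m n :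
  sum0 (fun k => sumN (fun i => A k i) n) m = sumN (fun i => sum0 (fun k => A k i) m) n.
Proof. induction m; simpl; [reflexivity|]. rewrite IHm, <- sumN_plus. reflexivity. Qed.
Lemma sum0_nonpos (x : nat -> R) m : (forall k, (k <= m)%nat -> x k <= 0) -> sum0 x m <= 0.
Proof. induction m; intros H; simpl; [apply H; lia|].
  assert (x (S m) <= 0) by (apply H; lia). assert (sum0 x m <= 0) by (apply IHm; intros; apply H; lia). lra. Qed.
Lemma sum0_nonpos_zero (x : nat -> R) m : (forall k, (k <= m)%nat -> x k <= 0) -> sum0 x m = 0 ->
  forall k, (k <= m)%nat -> x k = 0.
Proof. induction m; intros H Hs k Hk; simpl in Hs.
  - replace k with O by lia. exact Hs.
  - assert (x (S m) <= 0) by (apply H; lia). assert (sum0 x m <= 0) by (apply sum0_nonpos; intros; apply H; lia).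
    destruct (Nat.eq_dec k (S m)) as [->|]; [lra|]. apply IHm; [intros; apply H; lia|lra|lia]. Qed.

Lemma argmax_list {A} (l : list A) (P : A -> Prop) (G : A -> R) :
  (exists x, In x l /\ P x) -> exists x, In x l /\ P x /\ forall y, In y l -> P y -> G y <= G x.
Proof. induction l as [|a l IH]; intros [x [Hx Px]]; [destruct Hx|].
  destruct (classic (exists x, In x l /\ P x)) as [He|Hn].
  - destruct (IH He) as [m [Hm [Pm Gm]]].
    destruct (classic (P a /\ G m <= G a)) as [[Pa Ga]|Hna].
    + exists a. split; [left; auto|split; auto]. intros y [<-|Hy] Py; [lra|]. specialize (Gm y Hy Py). lra.
    + exists m. split; [right; auto|split; auto]. intros y [Ey|Hy] Py; [subst y|auto].
      destruct (Rle_dec (G a) (G m)); auto. exfalso; apply Hna; split; auto; lra.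
  - destruct Hx as [Ex|Hx]; [subst x|exfalso; apply Hn; eauto].
    exists a. split; [left; auto|split; auto]. intros y [Ey|Hy] Py; [subst y; lra|exfalso; apply Hn; eauto]. Qed.

Lemma ln_le_xm1 x : 0 < x -> ln x <= x - 1.
Proof. intros H. pose proof (exp_ineq1_le (ln x)). rewrite exp_ln in H0 by auto. lra. Qed.

Lemma bernoulli t p : 0 < t -> 1 < p -> 1 + p * (t - 1) <= Rpower t p.
Proof. intros Ht Hp. set (T := Rpower t p).
  assert (HT : 0 < T) by (unfold T, Rpower; apply exp_pos).
  set (A := T / p + 1 - 1 / p).
  assert (HA : 0 < A). { unfold A. assert (0 < T/p) by (apply Rdiv_lt_0_compat; lra).
    assert (1/p < 1) by (apply (Rmult_lt_reg_r p); [lra|]; field_simplify; lra). lra. }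
  assert (h1 := ln_le_xm1 (T / A) ltac:(apply Rdiv_lt_0_compat; lra)).
  assert (h2 := ln_le_xm1 (1 / A) ltac:(apply Rdiv_lt_0_compat; lra)).
  unfold Rdiv in h1, h2. rewrite ln_mult in h1 by (try apply Rinv_0_lt_compat; lra).
  rewrite Rmult_1_l in h2. rewrite ln_Rinv in h1, h2 by lra.
  assert (lnT : ln T = p * ln t) by (unfold T; apply ln_Rpower).
  assert (key : ln t <= ln A).
  { assert (E : (1/p) * (T * / A - 1) + (1 - 1/p) * (/ A - 1) = 0) by (unfold A; field; split; lra).
    assert (0 <= 1 - 1/p) by (assert (1/p < 1) by (apply (Rmult_lt_reg_r p); [lra|]; field_simplify; lra); lra).
    assert (0 < 1/p) by (apply Rdiv_lt_0_compat; lra).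
    assert (E2 : ln t - ln A = (1/p) * (ln T + - ln A) + (1 - 1/p) * (- ln A)) by (rewrite lnT; field; lra).
    nra. }
  assert (t <= A). { destruct (Rle_dec t A); auto. exfalso.
    assert (ln A < ln t) by (apply ln_increasing; lra). lra. }
  assert (p * t <= p * A) by (apply Rmult_le_compat_l; lra).
  assert (p * A = T + p - 1) by (unfold A; field; lra). lra. Qed.
Definition slope (lam p z : R) : R := if Rle_dec z 0 then 0 else p * rpow (z/lam) p / z.

Lemma rpow_nonneg x a : 0 <= rpow x a.
Proof. unfold rpow. destruct (Rle_dec x 0); [lra|]. unfold Rpower. left; apply exp_pos. Qed.

Lemma tangent lam p z x : 0 < lam -> 1 < p -> 0 <= z -> 0 <= x ->
  rpow (z/lam) p + slope lam p z * (x - z) <= rpow (x/lam) p.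
Proof. intros Hl Hp Hz Hx. unfold slope. destruct (Rle_dec z 0) as [Hz0|Hz0].
  - assert (z = 0) by lra. subst z. unfold rpow at 1. replace (0/lam) with 0 by (field; lra).
    destruct (Rle_dec 0 0); [|lra]. pose proof (rpow_nonneg (x/lam) p). lra.
  - assert (Hzl : 0 < z/lam) by (apply Rdiv_lt_0_compat; lra).
    unfold rpow at 1 2. destruct (Rle_dec (z/lam) 0); [lra|].
    set (A := Rpower (z/lam) p). assert (HA : 0 < A) by (unfold A, Rpower; apply exp_pos).
    unfold rpow. destruct (Rle_dec (x/lam) 0) as [Hx0|Hx0].
    + assert (x = 0). { destruct (Rle_dec x 0); [lra|]. exfalso.
        assert (0 < x/lam) by (apply Rdiv_lt_0_compat; lra). lra. }
      subst x. replace (A + p * A / z * (0 - z)) with (A * (1 - p)) by (field; lra). nra.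
    + assert (Hx1 : 0 < x) by (destruct (Rle_dec x 0); [|lra]; assert (x = 0) by lra; subst x;
        exfalso; apply Hx0; right; field; lra).
      replace (x/lam) with ((z/lam) * (x/z)) by (field; lra).
      rewrite <- Rpower_mult_distr by (try apply Rdiv_lt_0_compat; lra). fold A.
      pose proof (bernoulli (x/z) p ltac:(apply Rdiv_lt_0_compat; lra) Hp).
      replace (A + p * A / z * (x - z)) with (A * (1 + p * (x/z - 1))) by (field; lra).
      apply Rmult_le_compat_l; lra. Qed.
Lemma mnp a b : b <= 0 -> 0 <= a -> a * b <= 0.
Proof. intros; nra. Qed.
Lemma LP (n : nat) (mu c l : nat -> R) (v Lam : R) :
  (1 <= n)%nat ->
  (forall k, (k <= n)%nat -> 0 <= mu k) ->
  sum0 mu n = 1 ->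
  (forall a b, (a < b <= n)%nat -> c a < c b) ->
  sum0 (fun k => mu k * c k) n = v ->
  sum0 (fun k => mu k * l k) n = Lam ->
  exists a b, (a < b <= n)%nat /\ c a <= v <= c b /\
    0 <= (c b - v) * (l a - Lam) + (v - c a) * (l b - Lam).
Proof.
  intros Hn Hmu Hs1 Hc Hv HL.
  apply NNPP; intro Hcon.
  set (s := fun k => c k - v). set (r := fun k => l k - Lam).
  assert (Hss : sum0 (fun k => mu k * s k) n = 0).
  { unfold s. rewrite (sum0_ext _ (fun k => mu k * c k + (-v) * mu k)) by (intros; ring).
    rewrite sum0_plus, sum0_scal, Hv, Hs1. ring. }
  assert (Hrs : sum0 (fun k => mu k * r k) n = 0).
  { unfold r. rewrite (sum0_ext _ (fun k => mu k * l k + (-Lam) * mu k)) by (intros; ring).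
    rewrite sum0_plus, sum0_scal, HL, Hs1. ring. }
  assert (H : forall a b, (a < b <= n)%nat -> s a <= 0 -> 0 <= s b -> s b * r a - s a * r b < 0).
  { intros a b Hab Ha Hb. apply Rnot_le_lt. intro Hle. apply Hcon. exists a, b.
    unfold s, r in *. split; [auto|split; [lra|lra]]. }
  assert (Hmono : forall a b, (a <= n)%nat -> (b <= n)%nat -> s a < s b -> (a < b)%nat).
  { intros a b Ha Hb Hab. destruct (Nat.lt_ge_cases a b) as [|Hge]; auto.
    exfalso. destruct (Nat.eq_dec a b) as [->|]; [lra|]. assert (c b < c a) by (apply Hc; lia).
    unfold s in Hab. lra. }
  assert (Hzero : forall k, (k <= n)%nat -> s k = 0 -> r k < 0).
  { intros k Hk Hsk. destruct k as [|k].
    - assert (s 1%nat > 0) by (unfold s in *; assert (c 0%nat < c 1%nat) by (apply Hc; lia); lra).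
      pose proof (H 0%nat 1%nat ltac:(lia) ltac:(lra) ltac:(lra)). rewrite Hsk in H1.
      assert (s 1%nat * r 0%nat < 0) by lra. nra.
    - assert (s k < 0) by (unfold s in *; assert (c k < c (S k)) by (apply Hc; lia); lra).
      pose proof (H k (S k) ltac:(lia) ltac:(lra) ltac:(lra)). rewrite Hsk in H1. nra. }
  assert (Hall : forall k, (k <= n)%nat -> mu k = 0).
  { destruct (classic (exists b, (b <= n)%nat /\ 0 < s b)) as [[b0 [Hb0 Hsb0]]|Hno].
    - destruct (argmax_list (seq 0 (S n)) (fun b => 0 < s b) (fun b => r b / s b))
        as [bs [Hbs [Psb Gb]]].
      { exists b0. split; auto. apply in_seq. lia. }
      apply in_seq in Hbs. cbv beta in Psb, Gb. set (al := r bs / s bs).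
      assert (Ht : forall k, (k <= n)%nat -> mu k * (r k - al * s k) <= 0).
      { intros k Hk. assert (0 <= mu k) by auto.
        destruct (Rlt_le_dec 0 (s k)) as [Hp|Hnp].
        - assert (r k / s k <= al) by (apply Gb; auto; apply in_seq; lia).
          assert (E : r k - al * s k = (r k / s k - al) * s k) by (field; lra).
          assert (r k - al * s k <= 0) by (rewrite E, Rmult_comm; apply mnp; lra).
          apply mnp; lra.
        - destruct Hnp as [Hneg|Hz].
          + assert (k < bs)%nat by (apply Hmono; [lia|lia|lra]).
            pose proof (H k bs ltac:(lia) ltac:(lra) ltac:(lra)).
            assert (s bs * (r k - al * s k) = s bs * r k - s k * r bs) by (unfold al; field; lra).
            assert (r k - al * s k < 0) by nra. nra.
          + pose proof (Hzero k Hk Hz). rewrite Hz. nra. }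
      assert (Hst : sum0 (fun k => mu k * (r k - al * s k)) n = 0).
      { rewrite (sum0_ext _ (fun k => mu k * r k + (- al) * (mu k * s k))) by (intros; ring).
        rewrite sum0_plus, sum0_scal, Hrs, Hss. ring. }
      pose proof (sum0_nonpos_zero _ n Ht Hst) as Z1.
      assert (Hlow : forall k, (k <= n)%nat -> s k <= 0 -> mu k = 0).
      { intros k Hk Hsk. pose proof (Z1 k Hk) as Zk. assert (0 <= mu k) by auto.
        apply Rmult_integral in Zk. destruct Zk as [Zk|Zk]; auto. exfalso.
        destruct Hsk as [Hneg|Hz].
        - assert (k < bs)%nat by (apply Hmono; [lia|lia|lra]).
          pose proof (H k bs ltac:(lia) ltac:(lra) ltac:(lra)).
          assert (s bs * (r k - al * s k) = s bs * r k - s k * r bs) by (unfold al; field; lra).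
          rewrite Zk in H3. nra.
        - pose proof (Hzero k Hk Hz). rewrite Hz in Zk. lra. }
      assert (Hn2 : forall k, (k <= n)%nat -> - (mu k * s k) <= 0).
      { intros k Hk. destruct (Rle_dec (s k) 0). rewrite (Hlow k Hk r0). lra.
        assert (0 <= mu k) by auto. nra. }
      assert (Hs2 : sum0 (fun k => - (mu k * s k)) n = 0).
      { rewrite (sum0_ext _ (fun k => (-1) * (mu k * s k))) by (intros; ring). rewrite sum0_scal, Hss. ring. }
      pose proof (sum0_nonpos_zero _ n Hn2 Hs2) as Z2.
      intros k Hk. destruct (Rle_dec (s k) 0). apply Hlow; auto.
      pose proof (Z2 k Hk). nra.
    - assert (Hn1 : forall k, (k <= n)%nat -> mu k * s k <= 0).
      { intros k Hk. assert (0 <= mu k) by auto. destruct (Rle_dec (s k) 0). nra.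
        exfalso; apply Hno; exists k; split; auto; lra. }
      pose proof (sum0_nonpos_zero _ n Hn1 Hss) as Z1.
      assert (Hn2 : forall k, (k <= n)%nat -> mu k * r k <= 0).
      { intros k Hk. assert (0 <= mu k) by auto. destruct (Rle_dec (s k) 0).
        - destruct r0 as [Hneg|Hz].
          + pose proof (Z1 k Hk). assert (mu k = 0) by nra. rewrite H2; lra.
          + pose proof (Hzero k Hk Hz). nra.
        - exfalso; apply Hno; exists k; split; auto; lra. }
      pose proof (sum0_nonpos_zero _ n Hn2 Hrs) as Z2.
      intros k Hk. assert (0 <= mu k) by auto. destruct (Rle_dec (s k) 0).
      + destruct r0 as [Hneg|Hz].
        * pose proof (Z1 k Hk). nra.
        * pose proof (Hzero k Hk Hz). pose proof (Z2 k Hk). nra.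
      + exfalso; apply Hno; exists k; split; auto; lra. }
  assert (sum0 mu n = 0) by (apply sum0_zero; auto). lra.
Qed.
Lemma sumN_S (f : nat -> R) m : sumN f (S m) = sumN f m + f (S m).
Proof. reflexivity. Qed.
Lemma sumN_O (f : nat -> R) : sumN f O = 0.
Proof. reflexivity. Qed.
Lemma sum0_S (f : nat -> R) m : sum0 f (S m) = sum0 f m + f (S m).
Proof. reflexivity. Qed.
Lemma sum0_O (f : nat -> R) : sum0 f O = f O.
Proof. reflexivity. Qed.
Lemma H_strict (h : nat -> R) n : (forall i, (1 <= i <= n)%nat -> 0 < h i) ->
  forall a b, (a < b <= n)%nat -> sumN h a < sumN h b.
Proof. intros Hh a b. induction b; intros Hab; [lia|]. simpl.
  assert (0 < h (S b)) by (apply Hh; lia).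
  destruct (Nat.eq_dec a b) as [->|]; [lra|]. assert (sumN h a < sumN h b) by (apply IHb; lia). lra. Qed.

Lemma min_lemma (q : nat -> R) ymin k m :
  sumN (fun i => q i * (if Nat.leb i k then ymin else 0)) m = ymin * sumN q (Nat.min m k).
Proof. induction m; [rewrite !sumN_O; ring|]. rewrite sumN_S, IHm.
  destruct (Nat.leb_spec (S m) k).
  - replace (Nat.min (S m) k) with (S m) by lia. replace (Nat.min m k) with m by lia. rewrite sumN_S. ring.
  - replace (Nat.min (S m) k) with k by lia. replace (Nat.min m k) with k by lia. ring. Qed.

Lemma ind_lemma (zz : nat -> R) i m : (1 <= i)%nat ->
  sum0 (fun k => (zz k - zz (S k)) * (if Nat.leb i k then 1 else 0)) m =
  if Nat.leb i m then zz i - zz (S m) else 0.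
Proof. intros Hi. induction m.
  - rewrite sum0_O. destruct (Nat.leb_spec i 0); [lia|ring].
  - rewrite sum0_S, IHm. destruct (Nat.leb_spec i m); destruct (Nat.leb_spec i (S m)); try lia.
    + ring.
    + replace i with (S m) by lia. ring.
    + ring. Qed.

Lemma wsum (h : nat -> R) ymin Y a b m : (a <= b)%nat ->
  sumN (fun i => h i * (if Nat.leb i a then ymin else if Nat.leb i b then Y else 0)) m =
  ymin * sumN h (Nat.min m a) + Y * (sumN h (Nat.min m b) - sumN h (Nat.min m a)).
Proof. intros Hab. induction m; [rewrite !sumN_O; ring|]. rewrite sumN_S, IHm.
  destruct (Nat.leb_spec (S m) a); [|destruct (Nat.leb_spec (S m) b)].
  - replace (Nat.min (S m) a) with (S m) by lia. replace (Nat.min m a) with m by lia.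
    replace (Nat.min (S m) b) with (S m) by lia. replace (Nat.min m b) with m by lia. rewrite sumN_S. ring.
  - replace (Nat.min (S m) a) with a by lia. replace (Nat.min m a) with a by lia.
    replace (Nat.min (S m) b) with (S m) by lia. replace (Nat.min m b) with m by lia. rewrite sumN_S. ring.
  - replace (Nat.min (S m) a) with a by lia. replace (Nat.min m a) with a by lia.
    replace (Nat.min (S m) b) with b by lia. replace (Nat.min m b) with b by lia. ring. Qed.

Definition Yv (h : nat -> R) ymin v a b := (v - ymin * sumN h a) / (sumN h b - sumN h a).
Definition wfun (h : nat -> R) ymin v (a b : nat) : nat -> R :=
  fun i => if Nat.leb i a then ymin else if Nat.leb i b then Yv h ymin v a b else 0.

Lemma Y_bounds (h : nat -> R) n ymin v a b :
  (forall i, (1 <= i <= n)%nat -> 0 < h i) -> 0 < ymin -> (a < b <= n)%nat ->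
  ymin * sumN h a <= v <= ymin * sumN h b -> 0 <= Yv h ymin v a b <= ymin.
Proof. intros Hh Hy Hab Hv. assert (HD := H_strict h n Hh a b Hab). unfold Yv.
  set (D := sumN h b - sumN h a). assert (0 < D) by (unfold D; lra).
  split.
  - apply Rmult_le_pos; [lra|]. left; apply Rinv_0_lt_compat; lra.
  - assert (ymin - (v - ymin * sumN h a) / D = (ymin * sumN h b - v) / D) by (unfold D; field; lra).
    assert (0 <= (ymin * sumN h b - v) / D) by (apply Rmult_le_pos; [lra|]; left; apply Rinv_0_lt_compat; lra).
    lra. Qed.

Lemma w_feasible (h : nat -> R) n ymin v a b :
  (forall i, (1 <= i <= n)%nat -> 0 < h i) -> 0 < ymin -> (a < b <= n)%nat ->
  ymin * sumN h a <= v <= ymin * sumN h b ->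
  ymin >= wfun h ymin v a b 1%nat /\
  (forall i, (1 <= i < n)%nat -> wfun h ymin v a b i >= wfun h ymin v a b (S i)) /\
  wfun h ymin v a b n >= 0 /\
  sumN (fun i => h i * wfun h ymin v a b i) n = v.
Proof. intros Hh Hy Hab Hv. pose proof (Y_bounds h n ymin v a b Hh Hy Hab Hv) as HY.
  assert (HD := H_strict h n Hh a b Hab). unfold wfun.
  split; [|split; [|split]].
  - destruct (Nat.leb 1 a); [lra|]. destruct (Nat.leb 1 b); lra.
  - intros i Hi. destruct (Nat.leb_spec i a); destruct (Nat.leb_spec (S i) a);
      destruct (Nat.leb_spec i b); destruct (Nat.leb_spec (S i) b); try lia; lra.
  - destruct (Nat.leb n a); [lra|]. destruct (Nat.leb n b); lra.
  - rewrite wsum by lia. replace (Nat.min n a) with a by lia. replace (Nat.min n b) with b by lia.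
    unfold Yv. field. lra. Qed.
Lemma chain (z : nat -> R) n : (forall i, (1 <= i < n)%nat -> z i >= z (S i)) ->
  forall i j, (1 <= i <= j)%nat -> (j <= n)%nat -> z j <= z i.
Proof. intros Hz i j. induction j; intros Hij Hjn; [lia|].
  destruct (Nat.eq_dec i (S j)) as [->|]; [lra|].
  assert (z j <= z i) by (apply IHj; lia). assert (z j >= z (S j)) by (apply Hz; lia). lra. Qed.

Lemma stepE n (h : nat -> R) ymin v lam p (z : nat -> R) :
  (1 <= n)%nat -> (forall i, (1 <= i <= n)%nat -> 0 < h i) -> 0 < ymin -> 0 < lam -> 1 < p ->
  ymin >= z 1%nat -> (forall i, (1 <= i < n)%nat -> z i >= z (S i)) -> z n >= 0 ->
  sumN (fun i => h i * z i) n = v ->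
  exists a b, (a < b <= n)%nat /\ ymin * sumN h a <= v <= ymin * sumN h b /\
    sumN (fun i => rpow (z i / lam) p) n <= sumN (fun i => rpow (wfun h ymin v a b i / lam) p) n.
Proof.
  intros Hn Hh Hy Hl Hp Hz1 Hzm Hzn Hzv.
  assert (zb : forall i, (1 <= i <= n)%nat -> 0 <= z i <= ymin).
  { intros i Hi. split.
    - assert (z n <= z i) by (apply (chain z n Hzm); lia). lra.
    - assert (z i <= z 1%nat) by (apply (chain z n Hzm); lia). lra. }
  pose (zz := fun k => if Nat.eqb k 0 then ymin else if Nat.leb k n then z k else 0).
  assert (zz0 : zz O = ymin) by reflexivity.
  assert (zzk : forall k, (1 <= k <= n)%nat -> zz k = z k).
  { intros k Hk. unfold zz. destruct k; [lia|]. simpl Nat.eqb. cbv iota.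
    destruct (Nat.leb_spec (S k) n); [reflexivity|lia]. }
  assert (zzn : zz (S n) = 0).
  { unfold zz. simpl Nat.eqb. cbv iota. destruct (Nat.leb_spec (S n) n); [lia|reflexivity]. }
  pose (mu := fun k => (zz k - zz (S k)) / ymin).
  pose (e := fun k i => if Nat.leb i k then ymin else 0).
  pose (fz := fun i => rpow (z i / lam) p).
  pose (sl := fun i => slope lam p (z i)).
  pose (L := fun y : nat -> R => sumN (fun i => fz i + sl i * (y i - z i)) n).
  pose (c := fun k => ymin * sumN h k).
  assert (Hmu : forall k, (k <= n)%nat -> 0 <= mu k).
  { intros k Hk. unfold mu. apply Rmult_le_pos; [|left; apply Rinv_0_lt_compat; lra].
    assert (zz k >= zz (S k)); [|lra].
    destruct k.
    - rewrite zz0, zzk by lia. auto.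
    - rewrite zzk by lia. destruct (Nat.eq_dec (S k) n) as [E|E].
      + rewrite <- E in *. rewrite zzn. auto.
      + rewrite zzk by lia. apply Hzm; lia. }
  assert (Hs1 : sum0 mu n = 1).
  { unfold mu. rewrite (sum0_ext _ (fun k => (/ ymin) * (zz k - zz (S k)))) by (intros; unfold Rdiv; ring).
    rewrite sum0_scal, sum0_tele, zz0, zzn. field. lra. }
  assert (Hmue : forall i, (1 <= i <= n)%nat -> sum0 (fun k => mu k * e k i) n = z i).
  { intros i Hi.
    rewrite (sum0_ext _ (fun k => (zz k - zz (S k)) * (if Nat.leb i k then 1 else 0))).
    2:{ intros k Hk. unfold mu, e. destruct (Nat.leb i k); field; lra. }
    rewrite ind_lemma by lia. destruct (Nat.leb_spec i n); [|lia]. rewrite zzn, zzk by lia. ring. }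
  assert (Hc : forall a b, (a < b <= n)%nat -> c a < c b).
  { intros a b Hab. unfold c. apply Rmult_lt_compat_l; auto. apply (H_strict h n Hh); auto. }
  assert (Hce : forall k, (k <= n)%nat -> c k = sumN (fun i => h i * e k i) n).
  { intros k Hk. unfold e, c. rewrite min_lemma. replace (Nat.min n k) with k by lia. reflexivity. }
  assert (Hv' : sum0 (fun k => mu k * c k) n = v).
  { rewrite (sum0_ext _ (fun k => sumN (fun i => mu k * (h i * e k i)) n)).
    2:{ intros k Hk. rewrite Hce by auto. rewrite sumN_scal. reflexivity. }
    rewrite exchange. rewrite <- Hzv. apply sumN_ext. intros i Hi.
    rewrite (sum0_ext _ (fun k => h i * (mu k * e k i))) by (intros; ring).
    rewrite sum0_scal, Hmue by auto. reflexivity. }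
  set (Fz := sumN (fun i => rpow (z i / lam) p) n).
  assert (HL' : sum0 (fun k => mu k * L (e k)) n = Fz).
  { unfold L. rewrite (sum0_ext _ (fun k => sumN (fun i => mu k * (fz i + sl i * (e k i - z i))) n)).
    2:{ intros k Hk. rewrite sumN_scal. reflexivity. }
    rewrite exchange. unfold Fz. apply sumN_ext. intros i Hi.
    rewrite (sum0_ext _ (fun k => (fz i * mu k + sl i * (mu k * e k i)) + (- (sl i * z i)) * mu k))
      by (intros; ring).
    rewrite sum0_plus, sum0_plus, !sum0_scal, Hs1, Hmue by auto. unfold fz. ring. }
  destruct (LP n mu c (fun k => L (e k)) v Fz Hn Hmu Hs1 Hc Hv' HL') as [a [b [Hab [Hcv Hch]]]].
  exists a, b. split; auto. split; [unfold c in Hcv; lra|].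
  assert (Hval : ymin * sumN h a <= v <= ymin * sumN h b) by (unfold c in Hcv; lra).
  pose proof (Y_bounds h n ymin v a b Hh Hy Hab Hval) as HY.
  assert (HD := H_strict h n Hh a b Hab).
  assert (HwF : L (wfun h ymin v a b) <= sumN (fun i => rpow (wfun h ymin v a b i / lam) p) n).
  { unfold L. apply sumN_le. intros i Hi. unfold fz, sl. apply tangent; auto.
    - apply zb; auto.
    - unfold wfun. destruct (Nat.leb i a); [lra|]. destruct (Nat.leb i b); lra. }
  assert (Hcd : 0 < c b - c a) by (pose proof (Hc a b Hab); lra).
  assert (Hw : forall i, wfun h ymin v a b i = ((c b - v) * e a i + (v - c a) * e b i) / (c b - c a)).
  { intros i. unfold wfun, e, Yv, c.
    destruct (Nat.leb_spec i a); destruct (Nat.leb_spec i b); try lia.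
    - field. unfold c in Hcd; lra.
    - unfold c in Hcd. field. repeat split; intro; lra.
    - field. unfold c in Hcd; lra. }
  assert (HLw : L (wfun h ymin v a b) = ((c b - v) * L (e a) + (v - c a) * L (e b)) / (c b - c a)).
  { unfold L. rewrite (sumN_ext _ (fun i => (/ (c b - c a) * (c b - v)) * (fz i + sl i * (e a i - z i))
        + (/ (c b - c a) * (v - c a)) * (fz i + sl i * (e b i - z i)))).
    2:{ intros i Hi. rewrite Hw. field. lra. }
    rewrite sumN_plus, !sumN_scal. field. lra. }
  assert (Fz <= L (wfun h ymin v a b)).
  { rewrite HLw.
    assert (E : ((c b - v) * L (e a) + (v - c a) * L (e b)) / (c b - c a) - Fz =
      ((c b - v) * (L (e a) - Fz) + (v - c a) * (L (e b) - Fz)) / (c b - c a)) by (field; lra).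
    assert (0 <= ((c b - v) * (L (e a) - Fz) + (v - c a) * (L (e b) - Fz)) / (c b - c a)).
    { apply Rmult_le_pos; auto. left; apply Rinv_0_lt_compat; lra. }
    lra. }
  lra.
Qed.
Lemma hpos N nm W : (1 <= nm <= N)%nat -> inverse_S_shaped W ->
  forall i, (1 <= i <= nm)%nat -> 0 < hminus W N i.
Proof. intros Hn [Hinc _] i Hi. unfold hminus.
  assert (HN : 0 < INR N) by (apply lt_0_INR; lia).
  assert (HiN : INR i <= INR N) by (apply le_INR; lia).
  assert (Hi1 : INR (i - 1) < INR i) by (apply lt_INR; lia).
  assert (H0 : 0 <= INR (i - 1)) by apply pos_INR.
  assert (0 <= INR (i-1) / INR N) by (apply Rmult_le_pos; [lra|left; apply Rinv_0_lt_compat; lra]).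
  assert (INR i / INR N <= 1).
  { apply (Rmult_le_reg_r (INR N)); auto. unfold Rdiv. rewrite Rmult_assoc, Rinv_l by lra. lra. }
  assert (INR (i-1) / INR N < INR i / INR N).
  { apply Rmult_lt_compat_r; [apply Rinv_0_lt_compat; lra|lra]. }
  assert (W (INR (i - 1) / INR N) < W (INR i / INR N)) by (apply Hinc; lra).
  lra. Qed.

Lemma exists_valid (h : nat -> R) n ymin v : (1 <= n)%nat -> 0 < ymin ->
  0 <= v <= ymin * sumN h n ->
  exists a b, (a < b <= n)%nat /\ ymin * sumN h a <= v <= ymin * sumN h b.
Proof. intros Hn Hy Hv.
  assert (forall m, (1 <= m <= n)%nat -> v <= ymin * sumN h m ->
    exists a b, (a < b <= n)%nat /\ ymin * sumN h a <= v <= ymin * sumN h b).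
  { induction m; intros Hm Hvm; [lia|].
    destruct (Rle_dec (ymin * sumN h m) v) as [Hle|Hgt].
    - exists m, (S m). split; [lia|lra].
    - destruct m. + exfalso. apply Hgt. rewrite sumN_O. lra.
      + apply IHm; [lia|lra]. }
  apply (H n); [lia|lra]. Qed.
Theorem proposition3 (N : nat) (beta lambda : R) (nm : nat) (W : R -> R)
  (ymin v : R) :
  0 < beta < 1 -> 0 < lambda ->
  (1 <= nm <= N)%nat ->
  (forall x, 0 <= x <= 1 -> 0 <= W x <= 1) ->
  inverse_S_shaped W -> W 0 = 0 -> W 1 = 1 ->
  0 < ymin ->
  0 <= v <= ymin * sum_range (hminus W N) 1 nm ->
  exists l1 l2 : nat,
    (l1 < l2 <= nm)%nat /\
    let Y := (v - ymin * sum_range (hminus W N) 1 l1)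
             / sum_range (hminus W N) (S l1) l2 in
    0 <= Y <= ymin /\
    optimal W N nm beta lambda ymin v
      (fun i => if Nat.leb i l1 then ymin
                else if Nat.leb i l2 then Y else 0).
Proof.
  intros Hb Hl Hn HW HS W0 W1 Hy Hv.
  pose proof (hpos N nm W Hn HS) as Hh.
  rewrite sum_range_1 in Hv.
  assert (Hp : 1 < 1 / beta).
  { apply (Rmult_lt_reg_r beta); [lra|]. unfold Rdiv. rewrite Rmult_assoc, Rinv_l by lra. lra. }
  destruct (argmax_list (list_prod (seq 0 (S nm)) (seq 0 (S nm)))
    (fun ab => (fst ab < snd ab <= nm)%nat /\
       ymin * sumN (hminus W N) (fst ab) <= v <= ymin * sumN (hminus W N) (snd ab))
    (fun ab => sumN (fun i => rpow (wfun (hminus W N) ymin v (fst ab) (snd ab) i / lambda) (1/beta)) nm))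
    as [[a0 b0] [Hin [[Hab Hval] Hmax]]].
  { destruct (exists_valid (hminus W N) nm ymin v ltac:(lia) Hy Hv) as [a [b [Hab Hval]]].
    exists (a, b). split; [apply in_prod_iff; split; apply in_seq; lia | simpl; auto]. }
  simpl in Hab, Hval.
  exists a0, b0. split; [exact Hab|].
  cbv zeta. rewrite sum_range_1, sum_range_split by lia.
  assert (G : 0 <= Yv (hminus W N) ymin v a0 b0 <= ymin /\
     optimal W N nm beta lambda ymin v (wfun (hminus W N) ymin v a0 b0)).
  { split; [apply (Y_bounds _ nm); auto|].
    destruct (w_feasible (hminus W N) nm ymin v a0 b0 Hh Hy Hab Hval) as [f1 [f2 [f3 f4]]].
    split.
    - unfold feasible. rewrite sum_range_1. auto.
    - intros z [z1 [z2 [z3 z4]]]. rewrite sum_range_1 in z4.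
      destruct (stepE nm (hminus W N) ymin v lambda (1/beta) z ltac:(lia) Hh Hy Hl Hp z1 z2 z3 z4)
        as [a [b [Hab' [Hval' Hle]]]].
      unfold objective. rewrite !sum_range_1.
      assert (Hm := Hmax (a, b) ltac:(apply in_prod_iff; split; apply in_seq; lia) (conj Hab' Hval')).
      simpl in Hm. lra. }
  exact G.
Qed.
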